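(* Let $f$ be a $2\pi$-periodic continuous function with modulus of continuity $\omega(t)$, and let $A=(a_{n,k})$ be a lower triangular infinite matrix of real numbers ($a_{n,k}=0$ for $k>n$) with $a_{n,k}\ge 0$ and $\sum_{k=0}^n a_{n,k}=1$ for all $n$. Let $\beta\ge0$ and suppose \[ \sum_{k=0}^{m-1}(k+1)^{\beta}\left|\frac{a_{n,k}}{(k+1)^{\beta}}-\frac{a_{n,k+1}}{(k+2)^{\beta}}\right|=\mathcal{O}(a_{n,m}) \] for all $m=0,1,\dots,n$ and $n=0,1,\dots$. Suppose there is a function $H(u)\ge0$ such that $\int_u^{\pi} t^{-2}\omega(t)\,dt=\mathcal{O}(H(u))$ as $u\to+0$. Then \[ \|T_{n,A}(f)-f\|=\mathcal{O}\left(\omega\left(\frac{\pi}{n+1}\right)+a_{n,n}H\left(\frac{\pi}{n+1}\right)\right). \] If, in addition, $\int_0^{t}H(u)\,du=\mathcal{O}(tH(t))$ as $t\to+0$, then \[ \|T_{n,A}(f)-f\|=\mathcal{O}\left(a_{n,n}H\left(\frac{\pi}{n+1}\right)\right). \]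
   Context: $S_k(f;x)$ is the $k$-th partial sum of the Fourier series of $f$ at $x$, and $T_{n,A}(f;x):=\sum_{k=0}^n a_{n,k}S_k(f;x)$. $\|\cdot\|$ is the sup-norm. $\omega(\delta)=\sup_{|h|\le\delta}\sup_x|f(x+h)-f(x)|$. The notation $u=\mathcal{O}(v)$ means $u\le Cv$ for a positive constant $C$ (independent of $n$). *)

(* Defs.v *)
From Stdlib Require Import Reals.
From Coquelicot Require Import Coquelicot.
Open Scope R_scope.

Fixpoint sumR (F : nat -> R) (m : nat) : R :=
  match m with
  | O => 0
  | S m' => sumR F m' + F m'
  end.

Definition fourier_a (f : R -> R) (j : nat) : R :=
  / PI * RInt (fun t => f t * cos (INR j * t)) (- PI) PI.
Definition fourier_b (f : R -> R) (j : nat) : R :=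
  / PI * RInt (fun t => f t * sin (INR j * t)) (- PI) PI.

Definition S_k (f : R -> R) (k : nat) (x : R) : R :=
  fourier_a f 0 / 2
  + sumR (fun j => fourier_a f (S j) * cos (INR (S j) * x)
                 + fourier_b f (S j) * sin (INR (S j) * x)) k.

Definition T_nA (a : nat -> nat -> R) (f : R -> R) (n : nat) (x : R) : R :=
  sumR (fun k => a n k * S_k f k x) (S n).

Definition modcont (f : R -> R) (delta : R) : R :=
  real (Lub_Rbar (fun y => exists x h, Rabs h <= delta /\ y = Rabs (f (x + h) - f x))).

(* Main.v *)
Require Import Defs.
From Stdlib Require Import Reals Lra Lia ZArith.
From Coquelicot Require Import Coquelicot.
Open Scope R_scope.

Lemma lub_facts (E : R -> Prop) (y0 B : R) :
  E y0 -> (forall y, E y -> y <= B) ->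
  (forall y, E y -> y <= real (Lub_Rbar E)) /\ real (Lub_Rbar E) <= B.
Proof.
  intros H0 HB. destruct (Lub_Rbar_correct E) as [ub lub].
  destruct (Lub_Rbar E) as [r| |] eqn:Hl.
  - split.
    + intros y Hy. exact (ub y Hy).
    + apply (lub (Finite B)). intros y Hy. apply HB; auto.
  - exfalso. assert (Hc := lub (Finite B)). simpl in Hc. apply Hc. intros y Hy. apply HB; auto.
  - exfalso. exact (ub y0 H0).
Qed.

Lemma Z_nat_cases (m : Z) : exists k : nat, IZR m = INR k \/ IZR m = - INR k.
Proof.
  destruct m as [|p|p].
  - exists 0%nat. left. reflexivity.
  - exists (Pos.to_nat p). left. rewrite INR_IZR_INZ. rewrite positive_nat_Z. reflexivity.
  - exists (Pos.to_nat p). right. rewrite INR_IZR_INZ. rewrite positive_nat_Z.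
    rewrite <- opp_IZR. reflexivity.
Qed.

Lemma per_nat (g : R -> R) (g_per : forall x, g (x + 2 * PI) = g x) :
  forall k x, g (x + INR k * (2 * PI)) = g x.
Proof.
  induction k as [|k IH]; intros x.
  - simpl. f_equal. ring.
  - rewrite S_INR. replace (x + (INR k + 1) * (2 * PI)) with ((x + INR k * (2*PI)) + 2 * PI) by ring.
    rewrite g_per. apply IH.
Qed.

Lemma per_Z (g : R -> R) (g_per : forall x, g (x + 2 * PI) = g x) :
  forall m x, g (x + IZR m * (2 * PI)) = g x.
Proof.
  intros m x. destruct (Z_nat_cases m) as [k [Hk|Hk]]; rewrite Hk.
  - apply per_nat; auto.
  - rewrite <- (per_nat g g_per k (x + - INR k * (2 * PI))). f_equal. ring.
Qed.

Lemma reduce (x : R) : exists m : Z, 0 <= x - IZR m * (2 * PI) <= 2 * PI.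
Proof.
  assert (Hp : 0 < 2 * PI) by (generalize PI_RGT_0; lra).
  destruct (archimed (x / (2 * PI))) as [H1 H2].
  exists (up (x / (2 * PI)) - 1)%Z. rewrite minus_IZR.
  set (u := IZR (up (x / (2 * PI)))) in *.
  assert (Hx : x = (x / (2*PI)) * (2 * PI)) by (field; lra).
  split.
  - assert (x/(2*PI) >= u - 1) by lra.
    assert (x / (2*PI) * (2*PI) >= (u-1) * (2*PI)) by (apply Rmult_ge_compat_r; lra). lra.
  - assert (x/(2*PI) < u) by lra.
    assert (x / (2*PI) * (2*PI) <= u * (2*PI)) by (apply Rmult_le_compat_r; lra). lra.
Qed.

Section FP.
Variable f : R -> R.
Hypothesis f_cont : forall x, continuous f x.
Hypothesis f_per : forall x, f (x + 2 * PI) = f x.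

Lemma f_red x : exists y, 0 <= y <= 2 * PI /\ forall h, f (x + h) = f (y + h).
Proof.
  destruct (reduce x) as [m Hm]. exists (x - IZR m * (2 * PI)). split; auto.
  intros h. rewrite <- (per_Z f f_per m (x - IZR m * (2 * PI) + h)). f_equal. ring.
Qed.

Lemma f_bounded : exists M, 0 <= M /\ forall x, Rabs (f x) <= M.
Proof.
  assert (Hc : forall c, 0 <= c <= 2 * PI -> continuity_pt f c).
  { intros c _. apply continuity_pt_filterlim. apply f_cont. }
  assert (Hle : 0 <= 2 * PI) by (generalize PI_RGT_0; lra).
  destruct (continuity_ab_maj f 0 (2*PI) Hle Hc) as [Mx [HM _]].
  destruct (continuity_ab_min f 0 (2*PI) Hle Hc) as [mx [Hm _]].
  exists (Rabs (f Mx) + Rabs (f mx)). split. { generalize (Rabs_pos (f Mx)) (Rabs_pos (f mx)); lra. }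
  intros x. destruct (f_red x) as [y [Hy Hxy]].
  specialize (Hxy 0). rewrite !Rplus_0_r in Hxy. rewrite Hxy.
  specialize (HM y Hy). specialize (Hm y Hy).
  apply Rabs_le. split.
  - generalize (Rabs_pos (f Mx)) (Rle_abs (- f mx)); rewrite Rabs_Ropp; lra.
  - generalize (Rabs_pos (f mx)) (Rle_abs (f Mx)); lra.
Qed.

Lemma f_unif : forall eps, 0 < eps -> exists delta, 0 < delta /\
  forall x h, Rabs h < delta -> Rabs (f (x + h) - f x) < eps.
Proof.
  intros eps Heps.
  assert (Hc : forall c, -(2*PI) <= c <= 4 * PI -> continuity_pt f c).
  { intros c _. apply continuity_pt_filterlim. apply f_cont. }
  destruct (Heine_cor2 Hc (mkposreal eps Heps)) as [d Hd].
  exists (Rmin d PI). split. { apply Rmin_pos. apply cond_pos. apply PI_RGT_0. }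
  intros x h Hh. destruct (f_red x) as [y [Hy Hxy]].
  rewrite (Hxy h). rewrite <- (Rplus_0_r x). rewrite Hxy. rewrite Rplus_0_r.
  assert (Hh1 : Rabs h < d) by (generalize (Rmin_l d PI); lra).
  assert (Hh2 : Rabs h < PI) by (generalize (Rmin_r d PI); lra).
  apply Rabs_lt_between in Hh2.
  apply (Hd (y + h) y); simpl.
  - generalize PI_RGT_0; lra.
  - generalize PI_RGT_0; lra.
  - replace (y + h - y) with h by ring. auto.
Qed.

Definition om := modcont f.

Definition OmE (d : R) := fun y => exists x h, Rabs h <= d /\ y = Rabs (f (x + h) - f x).

Lemma om_facts d B : 0 <= d -> (forall x h, Rabs h <= d -> Rabs (f (x + h) - f x) <= B) ->
  (forall x h, Rabs h <= d -> Rabs (f (x + h) - f x) <= om d) /\ om d <= B.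
Proof.
  intros Hd HB. unfold om, modcont.
  destruct (lub_facts (OmE d) 0 B) as [H1 H2].
  - exists 0, 0. split. rewrite Rabs_R0; auto. rewrite Rplus_0_r, Rminus_diag, Rabs_R0; auto.
  - intros y [x [h [Hh ->]]]. apply HB; auto.
  - split; auto. intros x h Hh. apply H1. exists x, h. split; auto.
Qed.

Lemma f_M : exists M, 0 <= M /\ forall x h, Rabs (f (x + h) - f x) <= M.
Proof.
  destruct f_bounded as [M [HM Hb]]. exists (2 * M). split. lra.
  intros x h. unfold Rminus. eapply Rle_trans. apply Rabs_triang. rewrite Rabs_Ropp.
  generalize (Hb (x + h)) (Hb x). lra.
Qed.

Lemma om_ge d x h : Rabs h <= d -> Rabs (f (x + h) - f x) <= om d.
Proof.
  intros Hh. destruct f_M as [M [_ HM]].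
  assert (Hd : 0 <= d) by (generalize (Rabs_pos h); lra).
  apply (om_facts d M Hd (fun x h _ => HM x h)); auto.
Qed.

Lemma om_le d B : 0 <= d -> (forall x h, Rabs h <= d -> Rabs (f (x + h) - f x) <= B) -> om d <= B.
Proof. intros Hd HB. apply (om_facts d B Hd HB). Qed.

Lemma om_nonneg d : 0 <= d -> 0 <= om d.
Proof.
  intros Hd. eapply Rle_trans. apply Rabs_pos. apply (om_ge d 0 0). rewrite Rabs_R0; auto.
Qed.

Lemma om_mono s t : 0 <= s <= t -> om s <= om t.
Proof.
  intros Hst. apply om_le. lra. intros x h Hh. apply om_ge. lra.
Qed.

Lemma om_subadd s t : 0 <= s -> 0 <= t -> om (s + t) <= om s + om t.
Proof.
  intros Hs Ht. apply om_le. lra. intros x h Hh.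
  (* split h = h1 + h2 with |h1| <= s, |h2| <= t *)
  destruct (Rle_dec (Rabs h) s) as [Hl|Hl].
  - generalize (om_ge s x h Hl) (om_nonneg t Ht). lra.
  - set (h1 := if Rle_dec 0 h then s else - s).
    assert (Hh1 : Rabs h1 <= s).
    { unfold h1. destruct (Rle_dec 0 h). rewrite Rabs_right; lra. rewrite Rabs_Ropp, Rabs_right; lra. }
    assert (Hh2 : Rabs (h - h1) <= t).
    { unfold h1. destruct (Rle_dec 0 h).
      - rewrite Rabs_right in Hl, Hh by lra. rewrite Rabs_right; lra.
      - rewrite Rabs_left in Hl, Hh by lra. rewrite Rabs_left; lra. }
    replace (f (x + h) - f x) with ((f ((x + h1) + (h - h1)) - f (x + h1)) + (f (x + h1) - f x))
      by (replace (x + h1 + (h - h1)) with (x + h) by ring; ring).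
    eapply Rle_trans. apply Rabs_triang.
    generalize (om_ge t (x + h1) (h - h1) Hh2) (om_ge s x h1 Hh1). lra.
Qed.

Lemma om_small eps : 0 < eps -> exists delta, 0 < delta /\ forall d, 0 <= d < delta -> om d <= eps.
Proof.
  intros He. destruct (f_unif eps He) as [del [Hdel Hu]].
  exists del. split; auto. intros d Hd. apply om_le. lra.
  intros x h Hh. left. apply Hu. lra.
Qed.

Lemma om_cont t : 0 < t -> continuous om t.
Proof.
  intros Ht. apply filterlim_locally. intros eps.
  destruct (om_small (eps / 2)) as [del [Hdel Hsm]]. { generalize (cond_pos eps); lra. }
  exists (mkposreal (Rmin del t) (Rmin_pos _ _ Hdel Ht)). intros s Hs.
  unfold ball in Hs |- *; simpl in Hs |- *. unfold AbsRing_ball, abs, minus, plus, opp in Hs |- *; simpl in Hs |- *.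
  assert (Hs1 : Rabs (s - t) < del) by (generalize (Rmin_l del t); unfold Rminus; lra).
  assert (Hs2 : Rabs (s - t) < t) by (generalize (Rmin_r del t); unfold Rminus; lra).
  assert (Hsp : 0 < s) by (apply Rabs_lt_between in Hs2; lra).
  assert (Hb : om (Rabs (s - t)) <= eps / 2) by (apply Hsm; split; [apply Rabs_pos| lra]).
  assert (Hsub1 := om_subadd t (Rabs (s - t)) (Rlt_le _ _ Ht) (Rabs_pos _)).
  assert (Hsub2 := om_subadd s (Rabs (s - t)) (Rlt_le _ _ Hsp) (Rabs_pos _)).
  assert (Hm1 : om s <= om (t + Rabs (s - t))) by (apply om_mono; split; [lra| generalize (Rle_abs (s - t)); lra]).
  assert (Hm2 : om t <= om (s + Rabs (s - t))) by (apply om_mono; split; [lra| generalize (Rle_abs (-(s - t))); rewrite Rabs_Ropp; lra]).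
  apply Rabs_def1; generalize (cond_pos eps); lra.
Qed.

End FP.


Definition D (k : nat) (u : R) : R := 1/2 + sumR (fun j => cos (INR (S j) * u)) k.
Definition F (j : nat) (u : R) : R := sumR (fun k => D k u) (S j).

Lemma D_S k u : D (S k) u = D k u + cos (INR (S k) * u).
Proof. unfold D. cbn [sumR]. ring. Qed.

Lemma D_sin k u : 2 * sin (u / 2) * D k u = sin (INR k * u + u / 2).
Proof.
  induction k as [|k IH].
  - unfold D; simpl. replace (0 * u + u / 2) with (u/2) by ring. field.
  - rewrite D_S, Rmult_plus_distr_l, IH. rewrite S_INR.
    replace (INR k * u + u / 2) with ((INR k + 1) * u - u / 2) by field.
    replace ((INR k + 1) * u + u / 2) with ((INR k + 1) * u + u / 2) by ring.
    rewrite sin_minus, sin_plus. ring.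
Qed.

Lemma D_4 k u : 4 * sin (u / 2) ^ 2 * D k u = cos (INR k * u) - cos (INR (S k) * u).
Proof.
  replace (4 * sin (u / 2) ^ 2 * D k u) with (2 * sin (u/2) * (2 * sin (u / 2) * D k u)) by ring.
  rewrite D_sin. rewrite S_INR.
  replace ((INR k + 1) * u) with (INR k * u + 2 * (u / 2)) by field.
  rewrite sin_plus, cos_plus, cos_2a_sin, sin_2a. ring.
Qed.

Lemma F_4 j u : 4 * sin (u / 2) ^ 2 * F j u = 1 - cos (INR (S j) * u).
Proof.
  unfold F. induction j as [|j IH].
  - simpl sumR. rewrite Rplus_0_l, D_4. simpl. rewrite Rmult_0_l, cos_0. ring.
  - change (sumR (fun k => D k u) (S (S j))) with (sumR (fun k => D k u) (S j) + D (S j) u).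
    rewrite Rmult_plus_distr_l, IH, D_4. ring.
Qed.

Lemma sumR_le (G1 G2 : nat -> R) m : (forall k, (k < m)%nat -> G1 k <= G2 k) -> sumR G1 m <= sumR G2 m.
Proof.
  induction m as [|m IH]; intros H; simpl. lra.
  apply Rplus_le_compat. apply IH; intros; apply H; lia. apply H; lia.
Qed.

Lemma sumR_abs (G : nat -> R) m : Rabs (sumR G m) <= sumR (fun k => Rabs (G k)) m.
Proof.
  induction m as [|m IH]; simpl. rewrite Rabs_R0; lra.
  eapply Rle_trans. apply Rabs_triang. lra.
Qed.

Lemma sumR_const c m : sumR (fun _ => c) m = INR m * c.
Proof. induction m as [|m IH]; simpl sumR. simpl; ring. rewrite IH, S_INR; ring. Qed.

Lemma D_abs k u : Rabs (D k u) <= INR k + 1.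
Proof.
  unfold D. eapply Rle_trans. apply Rabs_triang.
  rewrite Rabs_right by lra.
  assert (Rabs (sumR (fun j => cos (INR (S j) * u)) k) <= INR k).
  { eapply Rle_trans. apply sumR_abs. rewrite <- (Rmult_1_r (INR k)), <- sumR_const.
    apply sumR_le. intros. apply Rabs_le. apply COS_bound. }
  lra.
Qed.

Lemma F_abs1 j u : Rabs (F j u) <= (INR j + 1) ^ 2.
Proof.
  unfold F. eapply Rle_trans. apply sumR_abs.
  eapply Rle_trans. apply (sumR_le _ (fun _ => INR j + 1)).
  { intros k Hk. eapply Rle_trans. apply D_abs. apply Rplus_le_compat_r. apply le_INR. lia. }
  rewrite sumR_const, S_INR. lra.
Qed.

Lemma sin_lb3 a : 0 <= a <= 2 -> a / 3 <= sin a.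
Proof.
  intros Ha. assert (HP : a <= PI) by (generalize PI2_1; lra).
  destruct (sin_bound a 0 (proj1 Ha) HP) as [H _].
  unfold sin_approx, sin_term in H. simpl in H.
  assert (a * (a * a) <= 4 * a) by nra. lra.
Qed.

Lemma F_abs2 j u : 0 < Rabs u <= PI -> Rabs (F j u) <= 18 / (u * u).
Proof.
  intros Hu.
  assert (Hs : Rabs u / 6 <= Rabs (sin (u / 2))).
  { destruct (Rle_dec 0 u).
    - rewrite Rabs_right in * by lra. rewrite Rabs_right.
      + generalize (sin_lb3 (u/2)); generalize PI_4; intros; assert (u/2 <= 2) by lra. 
        assert (u/2/3 <= sin (u/2)) by (apply sin_lb3; lra). lra.
      + apply Rle_ge. apply sin_ge_0; generalize PI_RGT_0; lra.
    - rewrite Rabs_left in * by lra. rewrite Rabs_left1.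
      + replace (u/2) with (- (-u/2)) by field. rewrite sin_neg.
        assert (-u/2/3 <= sin (-u/2)) by (apply sin_lb3; generalize PI_4; lra). lra.
      + replace (u/2) with (- (-u/2)) by field. rewrite sin_neg.
        assert (0 <= sin (-u/2)) by (apply sin_ge_0; generalize PI_RGT_0; lra). lra. }
  assert (Hs2 : u * u / 9 <= 4 * sin (u / 2) ^ 2).
  { assert (Ha1 : sin (u/2) ^ 2 = Rabs (sin (u/2)) * Rabs (sin (u/2))) by (rewrite <- Rabs_mult; rewrite Rabs_right; [ring| apply Rle_ge; nra]).
    assert (Ha2 : u * u = Rabs u * Rabs u) by (rewrite <- Rabs_mult; rewrite Rabs_right; [ring| apply Rle_ge; nra]).
    rewrite Ha1, Ha2. assert (0 <= Rabs u) by apply Rabs_pos. nra. }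
  assert (Hpos : 0 < u * u) by (assert (u <> 0) by (intro; subst; rewrite Rabs_R0 in Hu; lra); nra).
  assert (H4 := F_4 j u).
  assert (Hc : Rabs (1 - cos (INR (S j) * u)) <= 2) by (apply Rabs_le; generalize (COS_bound (INR (S j) * u)); lra).
  rewrite <- H4 in Hc. rewrite Rabs_mult in Hc. rewrite (Rabs_right (4 * _)) in Hc by (apply Rle_ge; nra).
  apply (Rmult_le_reg_l (u * u / 9)). lra.
  replace (u * u / 9 * (18 / (u * u))) with 2 by (field; intro Hu0; subst; lra).
  eapply Rle_trans. 2: exact Hc. apply Rmult_le_compat_r. apply Rabs_pos. lra.
Qed.


Lemma is_RInt_val (g : R -> R) a b l l' : is_RInt g a b l -> l = l' -> is_RInt g a b l'.
Proof. intros H ->; exact H. Qed.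

Lemma is_RInt_fext (g1 g2 : R -> R) a b l : (forall u, g1 u = g2 u) -> is_RInt g1 a b l -> is_RInt g2 a b l.
Proof. intros H. apply is_RInt_ext. intros; auto. Qed.

Lemma cont_sumR (G : nat -> R -> R) m u : (forall j, continuous (G j) u) ->
  continuous (fun u => sumR (fun j => G j u) m) u.
Proof.
  intros HG. induction m as [|m IH].
  - simpl. apply continuous_const.
  - apply (continuous_plus (fun u => sumR (fun j => G j u) m) (G m)); auto.
Qed.

Lemma cont_cos c d u : continuous (fun t => cos (c * (t - d))) u.
Proof. apply (@ex_derive_continuous R_AbsRing R_NormedModule). auto_derive. auto. Qed.

Lemma cont_sin c d u : continuous (fun t => sin (c * (t - d))) u.
Proof. apply (@ex_derive_continuous R_AbsRing R_NormedModule). auto_derive. auto. Qed.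

Lemma D_cont k u : continuous (D k) u.
Proof.
  unfold D. apply (continuous_plus (fun _ => 1/2) (fun u => sumR (fun j => cos (INR (S j) * u)) k)).
  apply continuous_const. apply cont_sumR. intros j.
  apply (continuous_ext (fun t => cos (INR (S j) * (t - 0)))). intros; rewrite Rminus_0_r; auto.
  apply cont_cos.
Qed.

Lemma D_cont_sh k d u : continuous (fun t => D k (t - d)) u.
Proof.
  apply (continuous_comp (fun t => t - d) (D k)). apply (@ex_derive_continuous R_AbsRing R_NormedModule); auto_derive; auto.
  apply D_cont.
Qed.

Lemma sin_nPI k : sin (INR k * PI) = 0.
Proof.
  induction k as [|k IH]. simpl. rewrite Rmult_0_l. apply sin_0.
  rewrite S_INR, Rmult_plus_distr_r, Rmult_1_l, sin_plus, IH, sin_PI. ring.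
Qed.

Lemma int_cos k : is_RInt (fun u => cos (INR (S k) * u)) (- PI) PI 0.
Proof.
  assert (Hk : INR (S k) <> 0) by (apply not_0_INR; lia).
  apply (is_RInt_val _ _ _ (minus ((fun u => sin (INR (S k) * u) / INR (S k)) PI) ((fun u => sin (INR (S k) * u) / INR (S k)) (- PI)))).
  - apply (is_RInt_derive (fun u => sin (INR (S k) * u) / INR (S k))).
    + intros u _. auto_derive. auto. simpl. field. auto.
    + intros u _. apply (continuous_ext (fun t => cos (INR (S k) * (t - 0)))). intros; rewrite Rminus_0_r; auto.
      apply cont_cos.
  - change (sin (INR (S k) * PI) / INR (S k) + - (sin (INR (S k) * - PI) / INR (S k)) = 0). rewrite Ropp_mult_distr_r_reverse, sin_neg, sin_nPI. field. auto.
Qed.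

Lemma int_D k : is_RInt (D k) (- PI) PI PI.
Proof.
  induction k as [|k IH].
  - unfold D. simpl. apply (is_RInt_val _ _ _ (scal (PI - - PI) (1/2 + 0))).
    apply (@is_RInt_const R_NormedModule). unfold scal; simpl; unfold mult; simpl. field.
  - apply (is_RInt_fext (fun u => plus (D k u) (cos (INR (S k) * u)))).
    { intros u. rewrite D_S. reflexivity. }
    apply (is_RInt_val _ _ _ (plus PI 0)). apply (@is_RInt_plus R_NormedModule); auto. apply int_cos.
    unfold plus; simpl; ring.
Qed.

Lemma is_RInt_sumR (g : nat -> R -> R) (v : nat -> R) a b m :
  (forall k, is_RInt (g k) a b (v k)) ->
  is_RInt (fun u => sumR (fun k => g k u) m) a b (sumR v m).
Proof.
  intros H. induction m as [|m IH].
  - simpl. apply (is_RInt_val _ _ _ (scal (b - a) 0)). apply (@is_RInt_const R_NormedModule).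
    unfold scal; simpl; unfold mult; simpl; ring.
  - simpl. apply (@is_RInt_plus R_NormedModule (fun u => sumR (fun k => g k u) m) (g m)); auto.
Qed.

Lemma sumR_mult_l c (G : nat -> R) m : c * sumR G m = sumR (fun k => c * G k) m.
Proof. induction m as [|m IH]; simpl. ring. rewrite <- IH. ring. Qed.

Lemma sumR_ext (G1 G2 : nat -> R) m : (forall k, G1 k = G2 k) -> sumR G1 m = sumR G2 m.
Proof. intros H; induction m; simpl; auto. rewrite IHm, H; auto. Qed.

Lemma D_per k y : D k (y + 2 * PI) = D k y.
Proof.
  unfold D. f_equal. apply sumR_ext. intros j.
  replace (INR (S j) * (y + 2 * PI)) with (INR (S j) * y + 2 * INR (S j) * PI) by ring.
  apply cos_period.
Qed.

Lemma RInt_shift (p : R -> R) x : (forall t, continuous p t) -> (forall t, p (t + 2 * PI) = p t) ->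
  RInt (fun u => p (x + u)) (- PI) PI = RInt p (- PI) PI.
Proof.
  intros Hc Hp.
  assert (Hex : forall a b, ex_RInt p a b) by (intros; apply (@ex_RInt_continuous R_CompleteNormedModule); intros; apply Hc).
  assert (H1 : RInt (fun u => p (x + u)) (- PI) PI = RInt p (x - PI) (x + PI)).
  { transitivity (RInt (fun y => scal 1 (p (1 * y + x))) (- PI) PI).
    - apply RInt_ext. intros u _. unfold scal; simpl; unfold mult; simpl. rewrite Rmult_1_l. f_equal. ring.
    - rewrite (RInt_comp_lin p 1 x). f_equal; ring. 
      replace (1 * - PI + x) with (x - PI) by ring. replace (1 * PI + x) with (x + PI) by ring. apply Hex. }
  assert (H2 : RInt p PI (x + PI) = RInt p (- PI) (x - PI)).
  { transitivity (RInt (fun y => scal 1 (p (1 * y + 2 * PI))) (- PI) (x - PI)).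
    - rewrite (RInt_comp_lin p 1 (2 * PI)). f_equal; ring.
      replace (1 * - PI + 2 * PI) with PI by ring. replace (1 * (x - PI) + 2 * PI) with (x + PI) by ring. apply Hex.
    - apply RInt_ext. intros u _. unfold scal; simpl; unfold mult; simpl. rewrite Rmult_1_l.
      rewrite <- (Hp u). f_equal; ring. }
  rewrite H1.
  rewrite <- (RInt_Chasles p (x - PI) (- PI) (x + PI)) by auto.
  rewrite <- (RInt_Chasles p (- PI) PI (x + PI)) by auto.
  rewrite H2.
  assert (H3 := RInt_Chasles p (x - PI) (- PI) (x - PI) (Hex _ _) (Hex _ _)).
  rewrite RInt_point in H3. unfold plus, zero in *; simpl in *. lra.
Qed.


Section FR.
Variable f : R -> R.
Hypothesis f_cont : forall x, continuous f x.
Hypothesis f_per : forall x, f (x + 2 * PI) = f x.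

Lemma cont_fmul (g : R -> R) : (forall u, continuous g u) -> forall u, continuous (fun t => f t * g t) u.
Proof. intros Hg u. apply (continuous_mult f g u (f_cont u) (Hg u)). Qed.

Lemma ex_fmul (g : R -> R) a b : (forall u, continuous g u) -> ex_RInt (fun t => f t * g t) a b.
Proof. intros Hg. apply (@ex_RInt_continuous R_CompleteNormedModule). intros; apply cont_fmul; auto. Qed.

Lemma PI_neq0 : PI <> 0.
Proof. generalize PI_RGT_0; lra. Qed.

Lemma cos_c c u : continuous (fun t => cos (c * t)) u.
Proof. apply (continuous_ext (fun t => cos (c * (t - 0)))). intros; rewrite Rminus_0_r; auto. apply cont_cos. Qed.
Lemma sin_c c u : continuous (fun t => sin (c * t)) u.
Proof. apply (continuous_ext (fun t => sin (c * (t - 0)))). intros; rewrite Rminus_0_r; auto. apply cont_sin. Qed.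

Lemma fourier_int k x : is_RInt (fun t => f t * D k (t - x)) (- PI) PI (PI * S_k f k x).
Proof.
  induction k as [|k IH].
  - set (I0 := RInt (fun t => f t * cos (INR 0 * t)) (- PI) PI).
    assert (H0 : is_RInt (fun t => f t * cos (INR 0 * t)) (- PI) PI I0).
    { apply (@RInt_correct R_CompleteNormedModule). apply ex_fmul. intros; apply cos_c. }
    apply (@is_RInt_scal R_NormedModule _ _ _ (1/2)) in H0.
    eapply is_RInt_val.
    + eapply is_RInt_fext. 2: exact H0.
      intros u. unfold scal; simpl; unfold mult; simpl. unfold D; simpl sumR. rewrite Rmult_0_l, cos_0. ring.
    + unfold scal; simpl; unfold mult; simpl. unfold S_k, fourier_a. simpl sumR. fold I0. field. apply PI_neq0.
  - set (m := INR (S k)).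
    set (Ia := RInt (fun t => f t * cos (m * t)) (- PI) PI).
    set (Ib := RInt (fun t => f t * sin (m * t)) (- PI) PI).
    assert (Ha : is_RInt (fun t => f t * cos (m * t)) (- PI) PI Ia).
    { apply (@RInt_correct R_CompleteNormedModule). apply ex_fmul. intros; apply cos_c. }
    assert (Hb : is_RInt (fun t => f t * sin (m * t)) (- PI) PI Ib).
    { apply (@RInt_correct R_CompleteNormedModule). apply ex_fmul. intros; apply sin_c. }
    apply (@is_RInt_scal R_NormedModule _ _ _ (cos (m * x))) in Ha.
    apply (@is_RInt_scal R_NormedModule _ _ _ (sin (m * x))) in Hb.
    assert (Hs := @is_RInt_plus R_NormedModule _ _ _ _ _ _ Ha Hb).
    assert (Ht := @is_RInt_plus R_NormedModule _ _ _ _ _ _ IH Hs).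
    eapply is_RInt_val.
    + eapply is_RInt_fext. 2: exact Ht.
      intros u. unfold scal, plus; simpl; unfold mult; simpl. rewrite D_S. fold m.
      replace (m * (u - x)) with (m * u - m * x) by ring. rewrite cos_minus. ring.
    + unfold scal, plus; simpl; unfold mult; simpl.
      replace (S_k f (S k) x) with (S_k f k x + (fourier_a f (S k) * cos (m * x) + fourier_b f (S k) * sin (m * x))).
      2: { unfold S_k. cbn [sumR]. fold m. ring. }
      unfold fourier_a, fourier_b. fold m. fold Ia. fold Ib. field. apply PI_neq0.
Qed.

Lemma Sk_int k x : is_RInt (fun u => (f (x + u) - f x) * D k u) (- PI) PI (PI * (S_k f k x - f x)).
Proof.
  assert (H1 : is_RInt (fun u => f (x + u) * D k u) (- PI) PI (PI * S_k f k x)).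
  { eapply is_RInt_val.
    - apply (@RInt_correct R_CompleteNormedModule). apply (@ex_RInt_continuous R_CompleteNormedModule).
      intros z _. apply (continuous_mult (fun u => f (x + u)) (D k)).
      + apply (continuous_comp (fun u => x + u) f). apply (@ex_derive_continuous R_AbsRing R_NormedModule); auto_derive; auto. apply f_cont.
      + apply D_cont.
    - rewrite <- (is_RInt_unique _ _ _ _ (fourier_int k x)).
      rewrite <- (RInt_shift (fun t => f t * D k (t - x)) x).
      + apply RInt_ext. intros u _. f_equal. f_equal. ring.
      + apply cont_fmul. intros; apply D_cont_sh.
      + intros t. rewrite f_per. f_equal. replace (t + 2 * PI - x) with ((t - x) + 2 * PI) by ring. apply D_per. }
  assert (H2 := @is_RInt_scal R_NormedModule _ _ _ (f x) _ (int_D k)).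
  assert (H3 := @is_RInt_minus R_NormedModule _ _ _ _ _ _ H1 H2).
  eapply is_RInt_val.
  - eapply is_RInt_fext. 2: exact H3. intros u. unfold scal, minus, plus, opp; simpl; unfold mult; simpl. ring.
  - unfold scal, minus, plus, opp; simpl; unfold mult; simpl. ring.
Qed.

Lemma G_int j x : is_RInt (fun u => (f (x + u) - f x) * F j u) (- PI) PI
   (PI * sumR (fun k => S_k f k x - f x) (S j)).
Proof.
  eapply is_RInt_val.
  - eapply is_RInt_fext. 2: apply (is_RInt_sumR (fun k u => (f (x + u) - f x) * D k u)).
    + intros u. unfold F. rewrite sumR_mult_l. reflexivity.
    + intros k. apply Sk_int.
  - rewrite sumR_mult_l. reflexivity.
Qed.

End FR.


Lemma abs_RInt_bound (g w : R -> R) a b : a <= b -> ex_RInt g a b -> ex_RInt w a b ->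
  (forall u, a < u < b -> Rabs (g u) <= w u) -> Rabs (RInt g a b) <= RInt w a b.
Proof.
  intros Hab Hg Hw Hb. apply Rabs_le. split.
  - assert (Hw' : ex_RInt (fun u => opp (w u)) a b) by (apply (@ex_RInt_opp R_NormedModule); auto).
    assert (RInt (fun u => opp (w u)) a b <= RInt g a b).
    { apply RInt_le; auto. intros u Hu. specialize (Hb u Hu). apply Rabs_le_between in Hb.
      unfold opp; simpl; lra. }
    rewrite (@RInt_opp R_CompleteNormedModule) in H by auto. unfold opp in H; simpl in H. lra.
  - apply RInt_le; auto. intros u Hu. specialize (Hb u Hu). apply Rabs_le_between in Hb. lra.
Qed.

Lemma cont_inv2 c z : z <> 0 -> continuous (fun t => c / (t * t)) z.
Proof. intros Hz. apply (@ex_derive_continuous R_AbsRing R_NormedModule). auto_derive. intro H. apply Hz. nra. Qed.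

Section EB.
Variable f : R -> R.
Hypothesis f_cont : forall x, continuous f x.
Hypothesis f_per : forall x, f (x + 2 * PI) = f x.

Definition wI (t : R) := modcont f t / (t * t).

Lemma wI_cont t : 0 < t -> continuous wI t.
Proof.
  intros Ht. unfold wI.
  apply (continuous_ext (fun t => mult (modcont f t) (1 / (t * t)))).
  { intros; unfold mult; simpl; unfold Rdiv; ring. }
  apply (@continuous_mult R_UniformSpace R_AbsRing (modcont f) (fun t => 1 / (t * t))). apply (om_cont f f_cont f_per t Ht). apply cont_inv2. lra.
Qed.

Lemma wI_ex a b : 0 < a -> 0 < b -> ex_RInt wI a b.
Proof.
  intros Ha Hb. apply (@ex_RInt_continuous R_CompleteNormedModule). intros z Hz. apply wI_cont.
  assert (0 < Rmin a b) by (apply Rmin_pos; auto). lra.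
Qed.

Lemma phi_cont x u : continuous (fun u => f (x + u) - f x) u.
Proof.
  apply (continuous_ext (fun u => plus (f (x + u)) (opp (f x)))). { intros; reflexivity. }
  apply (@continuous_plus R_UniformSpace R_AbsRing R_NormedModule (fun u => f (x + u)) (fun _ => opp (f x))). apply (continuous_comp (fun u => x + u) f).
  apply (@ex_derive_continuous R_AbsRing R_NormedModule); auto_derive; auto. apply f_cont.
  apply continuous_const.
Qed.

Lemma F_cont j u : continuous (F j) u.
Proof. unfold F. apply cont_sumR. intros; apply D_cont. Qed.

Lemma g_ex x j a b : ex_RInt (fun u => (f (x + u) - f x) * F j u) a b.
Proof.
  apply (@ex_RInt_continuous R_CompleteNormedModule). intros z _.
  apply (continuous_mult (fun u => f (x + u) - f x) (F j)). apply phi_cont. apply F_cont.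
Qed.

Lemma G_bound n j x : (1 <= n)%nat -> (j <= n)%nat ->
  Rabs (RInt (fun u => (f (x + u) - f x) * F j u) (- PI) PI)
  <= 2 * (PI / INR (S n)) * ((INR n + 1) ^ 2 * modcont f (PI / INR (S n)))
     + 36 * RInt wI (PI / INR (S n)) PI.
Proof.
  intros Hn Hj. set (h := PI / INR (S n)). set (g := fun u => (f (x + u) - f x) * F j u).
  assert (HP := PI_RGT_0).
  assert (HSn : 2 <= INR (S n)) by (rewrite S_INR; apply (le_INR 1) in Hn; simpl in Hn; lra).
  assert (Hh0 : 0 < h) by (unfold h; apply Rdiv_lt_0_compat; lra).
  assert (HhP : h <= PI / 2).
  { unfold h. apply Rmult_le_compat_l. lra. apply Rinv_le_contravar; lra. }
  assert (Hjn : (INR j + 1) ^ 2 <= (INR n + 1) ^ 2).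
  { apply le_INR in Hj. assert (0 <= INR j) by apply pos_INR. apply pow_incr. lra. }
  assert (Hom0 : 0 <= modcont f h) by (apply (om_nonneg f f_cont f_per); lra).
  assert (Hex := g_ex x j).
  rewrite <- (RInt_Chasles g (- PI) (- h) PI) by auto.
  rewrite <- (RInt_Chasles g (- h) h PI) by auto.
  unfold plus; simpl.
  assert (Hmid : Rabs (RInt g (- h) h) <= 2 * h * ((INR n + 1) ^ 2 * modcont f h)).
  { eapply Rle_trans. apply (abs_RInt_bound g (fun _ => (INR n + 1) ^ 2 * modcont f h)). lra. auto.
    apply ex_RInt_const.
    - intros u Hu. unfold g. rewrite Rabs_mult.
      assert (Hp1 : Rabs (f (x + u) - f x) <= modcont f h) by (apply (om_ge f f_cont f_per); apply Rabs_le; lra).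
      assert (Hp2 : Rabs (F j u) <= (INR n + 1) ^ 2) by (eapply Rle_trans; [apply F_abs1| auto]).
      rewrite Rmult_comm. apply Rmult_le_compat; auto using Rabs_pos.
    - rewrite RInt_const. unfold scal; simpl; unfold mult; simpl. right; ring. }
  assert (Hw : forall a b, 0 < a -> 0 < b -> ex_RInt (fun t => 18 * wI t) a b).
  { intros a b Ha Hb. apply (@ex_RInt_scal R_CompleteNormedModule _ _ _ 18). apply wI_ex; auto. }
  assert (HRw : RInt (fun t => 18 * wI t) h PI = 18 * RInt wI h PI).
  { apply (@RInt_scal R_CompleteNormedModule). apply wI_ex; lra. }
  assert (Hgb : forall u, h <= Rabs u <= PI -> Rabs (g u) <= 18 * wI (Rabs u)).
  { intros u Hu. unfold g, wI. rewrite Rabs_mult.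
    assert (Hp1 : Rabs (f (x + u) - f x) <= modcont f (Rabs u)) by (apply (om_ge f f_cont f_per); lra).
    assert (Hp2 : Rabs (F j u) <= 18 / (u * u)) by (apply F_abs2; lra).
    assert (Huu : u * u = Rabs u * Rabs u) by (rewrite <- Rabs_mult; rewrite Rabs_right; [ring| apply Rle_ge; nra]).
    rewrite <- Huu.
    replace (18 * (modcont f (Rabs u) / (u * u))) with (modcont f (Rabs u) * (18 / (u * u))) by (unfold Rdiv; ring).
    apply Rmult_le_compat; auto using Rabs_pos. }
  assert (Hright : Rabs (RInt g h PI) <= 18 * RInt wI h PI).
  { rewrite <- HRw. apply abs_RInt_bound; [lra | apply Hex | apply Hw; lra | ].
    intros u Hu. assert (Habs : Rabs u = u) by (apply Rabs_right; lra). specialize (Hgb u). rewrite Habs in Hgb. apply Hgb; lra. }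
  assert (Hleft : Rabs (RInt g (- PI) (- h)) <= 18 * RInt wI h PI).
  { assert (Hc : RInt g (- PI) (- h) = RInt (fun y => g (- y)) h PI).
    { assert (H1 := @is_RInt_comp_opp R_NormedModule g PI h _ (@RInt_correct R_CompleteNormedModule _ _ _ (Hex (- PI) (- h)))).
      apply (@is_RInt_unique R_CompleteNormedModule) in H1. transitivity (RInt (fun y => opp (g (- y))) PI h). { symmetry. exact H1. }
      rewrite (@RInt_opp R_CompleteNormedModule (fun y => g (- y))).
      - rewrite (@opp_RInt_swap R_CompleteNormedModule). reflexivity.
        apply (@ex_RInt_continuous R_CompleteNormedModule). intros z _.
        apply (continuous_comp (fun y => - y) g). apply (@ex_derive_continuous R_AbsRing R_NormedModule); auto_derive; auto.
        apply (continuous_mult (fun u => f (x + u) - f x) (F j)). apply phi_cont. apply F_cont.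
      - apply (@ex_RInt_continuous R_CompleteNormedModule). intros z _.
        apply (continuous_comp (fun y => - y) g). apply (@ex_derive_continuous R_AbsRing R_NormedModule); auto_derive; auto.
        apply (continuous_mult (fun u => f (x + u) - f x) (F j)). apply phi_cont. apply F_cont. }
    rewrite Hc, <- HRw. apply abs_RInt_bound; [lra | | apply Hw; lra | ].
    - apply (@ex_RInt_continuous R_CompleteNormedModule). intros z _.
      apply (continuous_comp (fun y => - y) g). apply (@ex_derive_continuous R_AbsRing R_NormedModule); auto_derive; auto.
      apply (continuous_mult (fun u => f (x + u) - f x) (F j)). apply phi_cont. apply F_cont.
    - intros u Hu. specialize (Hgb (- u)). rewrite Rabs_Ropp, Rabs_right in Hgb by lra.
      apply Hgb. lra. }
  eapply Rle_trans. apply Rabs_triang. eapply Rle_trans. apply Rplus_le_compat_l. apply Rabs_triang.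
  lra.
Qed.

Lemma J_lower n : (1 <= n)%nat ->
  modcont f (PI / INR (S n)) * (INR n / PI) <= RInt wI (PI / INR (S n)) PI.
Proof.
  intros Hn. set (h := PI / INR (S n)).
  assert (HP := PI_RGT_0).
  assert (HSn : 2 <= INR (S n)) by (rewrite S_INR; apply (le_INR 1) in Hn; simpl in Hn; lra).
  assert (Hh0 : 0 < h) by (unfold h; apply Rdiv_lt_0_compat; lra).
  assert (HhP : h <= PI / 2).
  { unfold h. apply Rmult_le_compat_l. lra. apply Rinv_le_contravar; lra. }
  set (c := modcont f h).
  assert (Hint : is_RInt (fun t => c / (t * t)) h PI (c * (INR n / PI))).
  { eapply is_RInt_val.
    - apply (@is_RInt_derive R_CompleteNormedModule (fun t => - c / t)).
      + intros t Ht. rewrite Rmin_left, Rmax_right in Ht by lra. auto_derive. lra. field. lra.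
      + intros t Ht. rewrite Rmin_left, Rmax_right in Ht by lra. apply cont_inv2. lra.
    - unfold minus, plus, opp; simpl. unfold h. rewrite S_INR. field. split. lra. rewrite <- S_INR. lra. }
 rewrite <- (is_RInt_unique _ _ _ _ Hint).
  apply RInt_le. lra. eexists; eauto. apply wI_ex; lra.
  intros t Ht. unfold wI. unfold Rdiv. apply Rmult_le_compat_r.
  - assert (0 < t * t) by nra. left; apply Rinv_0_lt_compat; auto.
  - apply (om_mono f f_cont f_per). lra.
Qed.

End EB.


Lemma abel (b e : nat -> R) m :
  sumR (fun k => b k * e k) (S m) =
  sumR (fun k => (b k - b (S k)) * sumR e (S k)) m + b m * sumR e (S m).
Proof.
  induction m as [|m IH].
  - simpl. ring.
  - change (sumR (fun k => b k * e k) (S (S m))) with (sumR (fun k => b k * e k) (S m) + b (S m) * e (S m)).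
    rewrite IH. change (sumR e (S (S m))) with (sumR e (S m) + e (S m)).
    change (sumR (fun k => (b k - b (S k)) * sumR e (S k)) (S m)) with
      (sumR (fun k => (b k - b (S k)) * sumR e (S k)) m + (b m - b (S m)) * sumR e (S m)).
    ring.
Qed.

Lemma telesc (c : nat -> R) k : sumR (fun i => c (S i) - c i) k = c k - c 0%nat.
Proof. induction k as [|k IH]; simpl. ring. rewrite IH. ring. Qed.

Lemma abel_bound1 (c e : nat -> R) M n :
  (forall k, c k <= c (S k)) -> 0 <= c 0%nat ->
  (forall k, (k <= n)%nat -> Rabs (sumR e (S k)) <= M) ->
  forall k, (k <= n)%nat -> Rabs (sumR (fun i => c i * e i) (S k)) <= 2 * c k * M.
Proof.
  intros Hc Hc0 HM k Hk.
  assert (HM0 : 0 <= M) by (eapply Rle_trans; [apply Rabs_pos| apply (HM 0%nat); lia]).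
  rewrite abel. eapply Rle_trans. apply Rabs_triang.
  assert (H1 : Rabs (sumR (fun i => (c i - c (S i)) * sumR e (S i)) k) <= (c k - c 0%nat) * M).
  { eapply Rle_trans. apply sumR_abs. rewrite <- telesc.
    rewrite Rmult_comm, sumR_mult_l.
    apply sumR_le. intros i Hi. rewrite Rabs_mult. rewrite Rabs_minus_sym, Rabs_right.
    rewrite Rmult_comm. apply Rmult_le_compat_r. specialize (Hc i); lra. apply HM; lia.
    specialize (Hc i); lra. }
  assert (Hck : 0 <= c k).
  { clear -Hc Hc0. induction k. auto. specialize (Hc k). lra. }
  assert (H2 : Rabs (c k * sumR e (S k)) <= c k * M).
  { rewrite Rabs_mult, Rabs_right by lra. apply Rmult_le_compat_l; auto. }
  nra.
Qed.

Lemma abel_bound2 (b e c : nat -> R) M n :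
  0 <= M -> (forall k, 0 <= c k) ->
  (forall k, (k <= n)%nat -> Rabs (sumR e (S k)) <= 2 * c k * M) ->
  Rabs (sumR (fun k => b k * e k) (S n)) <=
  2 * M * (sumR (fun k => c k * Rabs (b k - b (S k))) n + c n * Rabs (b n)).
Proof.
  intros HM Hc HE. rewrite abel. eapply Rle_trans. apply Rabs_triang.
  rewrite Rmult_plus_distr_l. apply Rplus_le_compat.
  - eapply Rle_trans. apply sumR_abs. rewrite sumR_mult_l. apply sumR_le. intros k Hk.
    rewrite Rabs_mult. specialize (HE k ltac:(lia)). specialize (Hc k).
    assert (0 <= Rabs (b k - b (S k))) by apply Rabs_pos. nra.
  - rewrite Rabs_mult. specialize (HE n ltac:(lia)). specialize (Hc n).
    assert (0 <= Rabs (b n)) by apply Rabs_pos. nra.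
Qed.


Lemma sumR_minus (F1 F2 : nat -> R) m : sumR F1 m - sumR F2 m = sumR (fun k => F1 k - F2 k) m.
Proof. induction m as [|m IH]; simpl. ring. rewrite <- IH. ring. Qed.

Lemma Rpower_pos x y : 0 < Rpower x y.
Proof. unfold Rpower. apply exp_pos. Qed.

Lemma core (f : R -> R) (a : nat -> nat -> R) (beta : R) (H : R -> R)
  (f_cont : forall x, continuous f x)
  (f_per : forall x, f (x + 2 * PI) = f x)
  (a_nonneg : forall n k, 0 <= a n k)
  (a_sum : forall n, sumR (fun k => a n k) (S n) = 1)
  (beta_ge0 : 0 <= beta) (K : R)
  (HK : forall n m : nat, (m <= n)%nat ->
      sumR (fun k => Rpower (INR k + 1) beta *
              Rabs (a n k / Rpower (INR k + 1) beta
                    - a n (S k) / Rpower (INR k + 2) beta)) m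
      <= K * a n m)
  (H_nonneg : forall u, 0 < u -> 0 <= H u) (CH del : R) (Hdel : 0 < del)
  (HH : forall u, 0 < u < del -> RInt (fun t => modcont f t / (t * t)) u PI <= CH * H u) :
  exists N : nat, forall n : nat, (N <= n)%nat -> forall x,
      Rabs (T_nA a f n x - f x)
      <= (2 * (4 * PI + 36 / PI) * (Rabs K + 1) * CH) * (a n n * H (PI / INR (S n))).
Proof.
  assert (HP := PI_RGT_0).
  destruct (archimed_cor1 (del / PI)) as [N0 [HN0 HN0p]]. { apply Rdiv_lt_0_compat; lra. }
  exists N0. intros n Hn x.
  assert (Hn1 : (1 <= n)%nat) by lia.
  set (h := PI / INR (S n)).
  assert (HSn : 2 <= INR (S n)) by (rewrite S_INR; apply (le_INR 1) in Hn1; simpl in Hn1; lra).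
  assert (Hh0 : 0 < h) by (unfold h; apply Rdiv_lt_0_compat; lra).
  assert (Hhd : h < del).
  { unfold h. assert (HN : 0 < INR N0) by (apply lt_0_INR; lia).
    assert (INR N0 <= INR (S n)) by (apply le_INR; lia).
    assert (PI / INR (S n) <= PI / INR N0).
    { apply Rmult_le_compat_l. lra. apply Rinv_le_contravar; lra. }
    assert (PI / INR N0 < del).
    { unfold Rdiv. apply (Rmult_lt_reg_r (/ PI)). apply Rinv_0_lt_compat; lra.
      replace (PI * / INR N0 * / PI) with (/ INR N0) by (field; lra). unfold Rdiv in HN0. lra. }
    lra. }
  set (J := RInt (wI f) h PI).
  assert (HJH : J <= CH * H h) by (apply HH; lra).
  assert (HJL := J_lower f f_cont f_per n Hn1). fold h in HJL. fold J in HJL.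
  assert (Hom0 : 0 <= modcont f h) by (apply (om_nonneg f f_cont f_per); lra).
  assert (HJ0 : 0 <= J).
  { eapply Rle_trans. 2: exact HJL. apply Rmult_le_pos; auto. apply Rdiv_le_0_compat. apply pos_INR. lra. }
  set (Cg := 4 * PI + 36 / PI).
  set (e := fun k => S_k f k x - f x).
  set (M := Cg * J).
  assert (HG : forall j, (j <= n)%nat -> Rabs (sumR e (S j)) <= M).
  { intros j Hj. assert (Hb := G_bound f f_cont f_per n j x Hn1 Hj). fold h in Hb. fold J in Hb.
    rewrite (is_RInt_unique _ _ _ _ (G_int f f_cont f_per j x)) in Hb.
    rewrite Rabs_mult, (Rabs_right PI) in Hb by lra. fold e in Hb.
    assert (Hh2 : 2 * h * ((INR n + 1) ^ 2 * modcont f h) <= 4 * PI * PI * J).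
    { replace (2 * h * ((INR n + 1) ^ 2 * modcont f h)) with (2 * PI * (INR n + 1) * modcont f h).
      2: { unfold h. rewrite S_INR. field. rewrite <- S_INR. lra. }
      apply (le_INR 1) in Hn1. simpl in Hn1.
      assert (2 * PI * (INR n + 1) * modcont f h <= 4 * PI * PI * (modcont f h * (INR n / PI))).
      { replace (4 * PI * PI * (modcont f h * (INR n / PI))) with (2 * PI * (2 * INR n) * modcont f h) by (field; lra).
        apply Rmult_le_compat_r; auto. apply Rmult_le_compat_l; lra. }
      assert (4 * PI * PI * (modcont f h * (INR n / PI)) <= 4 * PI * PI * J) by (apply Rmult_le_compat_l; nra).
      lra. }
    unfold M, Cg. apply (Rmult_le_reg_l PI). lra.
    replace (PI * ((4 * PI + 36 / PI) * J)) with (4 * PI * PI * J + 36 * J) by (field; lra). lra. }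
  set (c := fun k => Rpower (INR k + 1) beta).
  assert (Hcpos : forall k, 0 < c k) by (intros; apply Rpower_pos).
  assert (Hcmono : forall k, c k <= c (S k)).
  { intros k. unfold c. apply Rle_Rpower_l; auto. rewrite S_INR. split. assert (0 <= INR k) by apply pos_INR. lra. lra. }
  assert (HE1 := abel_bound1 c e M n Hcmono (Rlt_le _ _ (Hcpos 0%nat)) HG).
  assert (HM0 : 0 <= M) by (unfold M, Cg; apply Rmult_le_pos; auto; assert (0 < 36 / PI) by (apply Rdiv_lt_0_compat; lra); lra).
  set (b := fun k => a n k / c k).
  assert (HE2 := abel_bound2 b (fun i => c i * e i) c M n HM0 (fun k => Rlt_le _ _ (Hcpos k)) HE1).
  assert (HTf : T_nA a f n x - f x = sumR (fun k => b k * (c k * e k)) (S n)).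
  { unfold T_nA. rewrite <- (Rmult_1_l (f x)). rewrite <- (a_sum n). rewrite Rmult_comm, sumR_mult_l.
    rewrite sumR_minus. apply sumR_ext. intros k. unfold b, e. field. specialize (Hcpos k). lra. }
  rewrite HTf.
  assert (Hsum : sumR (fun k => c k * Rabs (b k - b (S k))) n <= Rabs K * a n n).
  { eapply Rle_trans. 2: apply Rmult_le_compat_r; [apply a_nonneg | apply Rle_abs].
    eapply Rle_trans. 2: apply (HK n n); lia. right. apply sumR_ext. intros k. unfold b, c.
    rewrite S_INR. replace (INR k + 1 + 1) with (INR k + 2) by ring. reflexivity. }
  assert (Hbn : c n * Rabs (b n) = a n n).
  { unfold b. rewrite Rabs_right. field. specialize (Hcpos n); lra.
    apply Rle_ge. apply Rdiv_le_0_compat. apply a_nonneg. apply Hcpos. }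
  rewrite Hbn in HE2.
  eapply Rle_trans. exact HE2.
  assert (Hann := a_nonneg n n).
  assert (HKp : 0 <= Rabs K) by apply Rabs_pos.
  assert (Hst : 2 * M * (sumR (fun k => c k * Rabs (b k - b (S k))) n + a n n) <= 2 * M * ((Rabs K + 1) * a n n)).
  { apply Rmult_le_compat_l. lra. lra. }
  eapply Rle_trans. exact Hst.
  unfold M.
  assert (HCg : 0 <= Cg) by (unfold Cg; assert (0 < 36 / PI) by (apply Rdiv_lt_0_compat; lra); lra).
  replace (2 * (Cg * J) * ((Rabs K + 1) * a n n)) with ((2 * Cg * ((Rabs K + 1) * a n n)) * J) by ring.
  replace (2 * Cg * (Rabs K + 1) * CH * (a n n * H h)) with ((2 * Cg * ((Rabs K + 1) * a n n)) * (CH * H h)) by ring.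
  apply Rmult_le_compat_l; auto.
  apply Rmult_le_pos. lra. apply Rmult_le_pos; lra.
Qed.


Theorem theorem3p2
  (f : R -> R) (a : nat -> nat -> R) (beta : R) (H : R -> R)
  (f_cont : forall x, continuous f x)
  (f_per : forall x, f (x + 2 * PI) = f x)
  (a_low : forall n k, (n < k)%nat -> a n k = 0)
  (a_nonneg : forall n k, 0 <= a n k)
  (a_sum : forall n, sumR (fun k => a n k) (S n) = 1)
  (beta_ge0 : 0 <= beta)
  (a_cond : exists K : R, forall n m : nat, (m <= n)%nat ->
      sumR (fun k => Rpower (INR k + 1) beta *
              Rabs (a n k / Rpower (INR k + 1) beta
                    - a n (S k) / Rpower (INR k + 2) beta)) m
      <= K * a n m)
  (H_nonneg : forall u, 0 < u -> 0 <= H u)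
  (H_cond : exists C delta : R, 0 < delta /\ forall u, 0 < u < delta ->
      RInt (fun t => modcont f t / (t * t)) u PI <= C * H u) :
  (exists C : R, exists N : nat, forall n : nat, (N <= n)%nat -> forall x,
      Rabs (T_nA a f n x - f x)
      <= C * (modcont f (PI / INR (S n)) + a n n * H (PI / INR (S n))))
  /\
  ((exists C delta : R, 0 < delta /\ forall t, 0 < t < delta ->
      exists v, is_RInt_gen H (at_right 0) (at_point t) v /\ v <= C * (t * H t)) ->
   exists C : R, exists N : nat, forall n : nat, (N <= n)%nat -> forall x,
      Rabs (T_nA a f n x - f x) <= C * (a n n * H (PI / INR (S n)))).
Proof.
  destruct a_cond as [K HK]. destruct H_cond as [CH [del [Hdel HH]]].
  destruct (core f a beta H f_cont f_per a_nonneg a_sum beta_ge0 K HK H_nonneg CH del Hdel HH) as [N HN].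
  set (C2 := 2 * (4 * PI + 36 / PI) * (Rabs K + 1) * CH) in HN.
  split.
  - exists (Rabs C2), N. intros n Hn x. eapply Rle_trans. apply HN; auto.
    assert (Hh : 0 < PI / INR (S n)).
    { apply Rdiv_lt_0_compat. apply PI_RGT_0. apply lt_0_INR; lia. }
    assert (H1 : 0 <= a n n * H (PI / INR (S n))) by (apply Rmult_le_pos; auto).
    assert (H2 : 0 <= modcont f (PI / INR (S n))) by (apply (om_nonneg f f_cont f_per); lra).
    eapply Rle_trans. apply Rmult_le_compat_r. exact H1. apply Rle_abs.
    apply Rmult_le_compat_l. apply Rabs_pos. lra.
  - intros _. exists C2, N. exact HN.
Qed.
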